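(* Let $G$ be the path on $n\ge 3$ vertices. Then $$\mathcal{R}(G)=\begin{cases}\displaystyle\sum_{i=1}^{n/2}\frac{2n^2-3n-4i+4}{n(n-1)^2-2(n-1)(i-1)} & \text{if } n \text{ is even},\\[2ex] \displaystyle\frac{2n^2-3n-1}{2n(n-1)^2}+\sum_{i=1}^{\lfloor n/2\rfloor}\frac{2n^3-3n^2-4n(i-1)+1}{n^2(n-1)^2-2n(n-1)(i-1)} & \text{if } n \text{ is odd}.\end{cases}$$
   Context: All graphs are finite, simple and connected, with at least two vertices; $d(u,v)$ denotes the shortest-path distance. $V_p$ denotes the set of all unordered pairs $(u,v)$ of distinct vertices. A vertex $x$ resolves the pair $(u,v)$ if $d(x,u)\neq d(x,v)$. For $(u,v)\in V_p$, $R(u,v)$ is the set of all vertices resolving $(u,v)$ (it always contains $u$ and $v$). The resolving share of a vertex $w$ for $(u,v)$ is $r_w(u,v)=\frac{1}{|R(u,v)|}$ if $w$ resolves $u$ and $v$, and $r_w(u,v)=0$ otherwise. For a vertex $w$, $R(w)$ is the set of pairs in $V_p$ resolved by $w$. The average resolving share of $w$ is $ar_w(G)=\frac{1}{|R(w)|}\sum_{(u,v)\in R(w)} r_w(u,v)$, and the resolving topological index of $G$ is $\mathcal{R}(G)=\sum_{w\in V(G)} ar_w(G)$. *)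

(* Defs.v *)
From mathcomp Require Import all_boot all_order all_algebra.
Set Implicit Arguments. Unset Strict Implicit. Unset Printing Implicit Defensive.
Import GRing.Theory Num.Theory.

(* A graph is given by an adjacency relation e : rel T on a finite vertex type T
   (simple: symmetric, irreflexive; connected). *)

Definition walk_len (T : finType) (e : rel T) (k : nat) (u v : T) : bool :=
  [exists p : k.-tuple T, path e u p && (last u p == v)].

(* Shortest-path distance: least k with a walk of length k from u to v
   (in a connected graph this is < #|T|, so the search range suffices). *)
Definition gdist (T : finType) (e : rel T) (u v : T) : nat :=
  find (fun k => walk_len e k u v) (iota 0 #|T|).

Definition resolves (T : finType) (e : rel T) (x : T) (P : {set T}) : bool :=
  [exists u in P, exists v in P, gdist e x u != gdist e x v].

Definition Vp (T : finType) : {set {set T}} := [set P : {set T} | #|P| == 2].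

Definition Rpair (T : finType) (e : rel T) (P : {set T}) : {set T} :=
  [set x | resolves e x P].

Definition Rvert (T : finType) (e : rel T) (w : T) : {set {set T}} :=
  [set P in Vp T | resolves e w P].

Local Open Scope ring_scope.
Definition rshare (T : finType) (e : rel T) (w : T) (P : {set T}) : rat :=
  if resolves e w P then (#|Rpair e P|%:R)^-1 else 0.

Definition ar (T : finType) (e : rel T) (w : T) : rat :=
  (#|Rvert e w|%:R)^-1 * \sum_(P in Rvert e w) rshare e w P.

Definition resolving_index (T : finType) (e : rel T) : rat :=
  \sum_(w : T) ar e w.

Definition path_rel (n : nat) : rel 'I_n :=
  fun i j => (i.+1 == j :> nat) || (j.+1 == i :> nat).
Arguments path_rel : clear implicits.

(* Main.v *)
Require Import Defs.
From mathcomp Require Import all_boot all_order all_algebra.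
From mathcomp Require Import zify ring lra.
Import GRing.Theory Num.Theory.
Set Implicit Arguments. Unset Strict Implicit. Unset Printing Implicit Defensive.

Definition nd (a b : nat) := (a - b) + (b - a).

Lemma path_bound n (p : seq 'I_n) (u : 'I_n) :
  path (path_rel n) u p -> nd (last u p) u <= size p.
Proof.
elim: p u => [|x p IH] u /=; first by rewrite /nd subnn.
case/andP => /orP[/eqP|/eqP] H /IH; rewrite /nd; lia.
Qed.

Lemma path_exists n d (u v : 'I_n) : nd u v = d ->
  exists p : seq 'I_n, [/\ size p = d, path (path_rel n) u p & last u p = v].
Proof.
elim: d u => [|d IH] u H.
  exists [::]; split => //; apply: val_inj => /=; move: H; rewrite /nd; lia.
case: (ltnP u v) => Huv.
  have Hu1 : u.+1 < n by have := ltn_ord v; lia.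
  have [p [Hs Hp Hl]] := IH (Ordinal Hu1) (ltac:(move: H; rewrite /nd /=; lia)).
  exists (Ordinal Hu1 :: p); split => //=; first by rewrite Hs.
  by rewrite Hp andbT /path_rel /= eqxx.
have Hu1 : u.-1 < n by have := ltn_ord u; lia.
have [p [Hs Hp Hl]] := IH (Ordinal Hu1) (ltac:(move: H; rewrite /nd /=; lia)).
exists (Ordinal Hu1 :: p); split => //=; first by rewrite Hs.
rewrite Hp andbT /path_rel /=; apply/orP; right; apply/eqP; move: H; rewrite /nd; lia.
Qed.

Lemma gdist_path n (u v : 'I_n) : gdist (path_rel n) u v = nd u v.
Proof.
rewrite /gdist.
have Hd : nd u v < #|'I_n| by rewrite card_ord; have := ltn_ord u; have := ltn_ord v; rewrite /nd; lia.
rewrite -(subnKC (ltnW Hd)) iotaD find_cat.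
have -> : has (fun k => walk_len (path_rel n) k u v) (iota 0 (nd u v)) = false.
  apply/hasPn => k; rewrite mem_iota add0n => /andP[_ Hk].
  apply/negP => /existsP [p /andP[Hp /eqP Hl]].
  have := path_bound Hp; rewrite Hl size_tuple; move: Hk; rewrite /nd; lia.
rewrite size_iota add0n.
case E: (#|'I_n| - nd u v) => [|m]; first lia.
rewrite /= ifT ?addn0 //.
have [p [Hs Hp Hl]] := path_exists (erefl (nd u v)).
apply/existsP; exists (@Tuple _ _ p (introT eqP Hs)); by rewrite /= Hp Hl eqxx.
Qed.


Lemma resolves_pair n (x a b : 'I_n) : a < b ->
  resolves (path_rel n) x [set a; b] = (x.*2 != a + b).
Proof.
move=> Hab.
have -> : (x.*2 != a + b) = (nd x a != nd x b).
  congr negb; apply/eqP/eqP; rewrite /nd; lia.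
rewrite /resolves; apply/existsP/idP.
  case=> y /andP[Hy /existsP[z /andP[Hz Hne]]]; move: Hy Hz Hne.
  rewrite !in_set2 !gdist_path => /orP[/eqP->|/eqP->] /orP[/eqP->|/eqP->] //;
   rewrite ?eqxx // eq_sym //.
move=> H; exists a; rewrite set21 /=; apply/existsP; exists b.
by rewrite set22 !gdist_path H.
Qed.

Lemma card_ord_pred n (f : nat -> bool) :
  #|[set x : 'I_n | f x]| = \sum_(0 <= i < n) f i.
Proof.
rewrite -sum1_card big_mkcond /= big_mkord; apply: eq_bigr => i _.
by rewrite in_set; case: (f i).
Qed.

Lemma sum_half_ne m s : \sum_(0 <= i < m) (i.*2 != s) + (~~ odd s && (s./2 < m)) = m.
Proof.
elim: m => [|m IH]; first by rewrite big_geq //; case: (odd s).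
rewrite big_nat_recr //= -addnA.
lia.
Qed.

Lemma card_Rpair n (a b : 'I_n) : a < b ->
  #|Rpair (path_rel n) [set a; b]| = n - ~~ odd (a + b).
Proof.
move=> Hab; rewrite /Rpair.
have -> : [set x | resolves (path_rel n) x [set a; b]] = [set x : 'I_n | x.*2 != a + b].
  by apply/setP => x; rewrite !in_set resolves_pair.
rewrite (card_ord_pred n (fun i => i.*2 != a + b)).
have := sum_half_ne n (a + b); have := ltn_ord b.
case: (odd (a+b)) => /=; lia.
Qed.

Lemma Vp_imset n : Vp 'I_n = [set [set p.1; p.2] | p in [set p : 'I_n * 'I_n | p.1 < p.2]].
Proof.
apply/setP => P; rewrite /Vp in_set; apply/idP/imsetP.
  case/cards2P => a [b [Hab ->]].
  case: (ltngtP a b) => H.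
  - by exists (a, b); rewrite ?in_set.
  - by exists (b, a); rewrite ?in_set // setUC.
  - by move: Hab; rewrite (val_inj H) eqxx.
case=> [[a b]]; rewrite in_set /= => Hab ->; rewrite cards2.
by rewrite neq_ltn Hab.
Qed.

Lemma sum_Vp n (F : {set 'I_n} -> rat) :
  (\sum_(P in Vp 'I_n) F P = \sum_(v : 'I_n) \sum_(u : 'I_n | (u < v)%N) F [set u; v])%R.
Proof.
rewrite Vp_imset big_imset /=.
  rewrite (eq_bigl (fun p : 'I_n * 'I_n => p.1 < p.2)); last by move=> p; rewrite in_set.
  rewrite -(pair_big_dep predT (fun u v : 'I_n => u < v) (fun u v => F [set u; v])) /=.
  by rewrite (exchange_big_dep predT) //=.
move=> [a b] [c d]; rewrite !in_set /= => H1 H2 E.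
have Ha : a \in [set c; d] by rewrite -E set21.
have Hb : b \in [set c; d] by rewrite -E set22.
have Hc : c \in [set a; b] by rewrite E set21.
move: Ha Hb Hc; rewrite !in_set2.
case/orP=> /eqP Ea; case/orP=> /eqP Eb; case/orP=> /eqP Ec; subst => //; try lia.
Qed.


Definition TTn n (f : nat -> nat -> nat) := \sum_(0 <= v < n) \sum_(0 <= u < v) f u v.

Lemma K1 n : (TTn n (fun _ _ => 1)).*2 = n * n.-1.
Proof.
rewrite /TTn; elim: n => [|n IH]; first by rewrite big_geq.
rewrite big_nat_recr //= sum_nat_const_nat; nia.
Qed.

Lemma K2i k v : \sum_(0 <= u < k) odd (u + v) = if odd v then uphalf k else k./2.
Proof.
elim: k => [|k IH]; first by rewrite big_geq //; case: (odd v).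
rewrite big_nat_recr //= IH; case Hv: (odd v); lia.
Qed.

Lemma K2 n : TTn n (fun u v => odd (u + v)) = n./2 * uphalf n.
Proof.
rewrite /TTn; elim: n => [|n IH]; first by rewrite big_geq.
rewrite big_nat_recr //= IH K2i.
have E := odd_double_half n.
case Hn: (odd n); rewrite Hn in E; rewrite -E; lia.
Qed.

Lemma K3i k v w : \sum_(0 <= u < k) (u + v == w.*2) = (w.*2 - v < k) && (v <= w.*2).
Proof.
elim: k => [|k IH]; first by rewrite big_geq.
rewrite big_nat_recr //= IH; lia.
Qed.

Lemma K3 n w : TTn n (fun u v => u + v == w.*2) = minn w.*2.+1 n - w.+1.
Proof.
rewrite /TTn; elim: n => [|n IH]; first by rewrite big_geq.
rewrite big_nat_recr //= IH K3i; lia.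
Qed.

Section SD.
Local Open Scope ring_scope.


Lemma ord2nat n (G : nat -> nat -> rat) :
  \sum_(v : 'I_n) \sum_(u : 'I_n | (u < v)%N) G u v = \sum_(0 <= v < n) \sum_(0 <= u < v) G u v.
Proof.
rewrite [RHS]big_mkord; apply: eq_bigr => v _.
rewrite -(big_mkord (fun u => (u < v)%N) (fun u => G u v)).
by rewrite (big_nat_widen 0 v n) //; apply: ltnW.
Qed.

Lemma TT_cast n f : (TTn n f)%:R = \sum_(0 <= v < n) \sum_(0 <= u < v) (f u v)%:R :> rat.
Proof.
rewrite /TTn natr_sum; apply: eq_bigr => v _; by rewrite natr_sum.
Qed.

Lemma TT_lin2 n f g (a b : rat) :
  \sum_(0 <= v < n) \sum_(0 <= u < v) ((f u v)%:R * a + (g u v)%:R * b) =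
  (TTn n f)%:R * a + (TTn n g)%:R * b.
Proof.
rewrite !TT_cast !mulr_suml -big_split; apply: eq_bigr => v _.
by rewrite !mulr_suml -big_split.
Qed.

Lemma TT_add n f g : (TTn n f + TTn n g = TTn n (fun u v => f u v + g u v))%N.
Proof.
rewrite /TTn -big_split; apply: eq_bigr => v _; by rewrite -big_split.
Qed.

Lemma TT_ext n f g : (forall u v, f u v = g u v) -> TTn n f = TTn n g.
Proof. by move=> H; rewrite /TTn; apply: eq_bigr => v _; apply: eq_bigr => u _. Qed.

Lemma card_Rvert n (w : 'I_n) :
  (#|Rvert (path_rel n) w|)%:R = (TTn n (fun u v => w.*2 != u + v)%N)%:R :> rat.
Proof.
have -> : #|Rvert (path_rel n) w| = (\sum_(P in Vp 'I_n) (resolves (path_rel n) w P : nat))%N.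
  rewrite /Rvert -sum1_card [LHS]big_mkcond [RHS]big_mkcond; apply: eq_bigr => P _.
  by rewrite in_set; case: (P \in Vp 'I_n); case: resolves.
rewrite natr_sum sum_Vp.
rewrite (eq_bigr (fun v : 'I_n => \sum_(u : 'I_n | (u < v)%N) ((w.*2 != (u + v)%N : nat)%:R : rat))).
  rewrite (ord2nat n (fun u v => ((w.*2 != (u + v)%N : nat)%:R : rat))). by rewrite TT_cast.
move=> v _; apply: eq_bigr => u Huv; by rewrite resolves_pair.
Qed.

Lemma sum_rshare n (w : 'I_n) : (1 < n)%N ->
  \sum_(P in Rvert (path_rel n) w) rshare (path_rel n) w P =
  (TTn n (fun u v => odd (u + v)%N))%:R * (n%:R)^-1 +
  (TTn n (fun u v => 1 - odd (u + v) - (u + v == w.*2))%N)%:R * (n%:R - 1)^-1.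
Proof.
move=> Hn.
have -> : \sum_(P in Rvert (path_rel n) w) rshare (path_rel n) w P =
          \sum_(P in Vp 'I_n) rshare (path_rel n) w P.
  rewrite /Rvert [LHS]big_mkcond [RHS]big_mkcond; apply: eq_bigr => P _.
  rewrite in_set; case: (P \in Vp 'I_n) => //=; rewrite /rshare; by case: resolves.
rewrite sum_Vp -TT_lin2 -ord2nat; apply: eq_bigr => v _; apply: eq_bigr => u Huv.
rewrite /rshare resolves_pair // card_Rpair //.
have Hne : (w.*2 != u + v)%N = ~~ (u + v == w.*2)%N by rewrite eq_sym.
rewrite Hne.
have Hn1 : (n - 1)%:R = n%:R - 1 :> rat by rewrite natrB // ltnW.
case Ho: (odd (u + v)%N); case He: (u + v == w.*2)%N => /=.
- by move/eqP: He Ho => ->; rewrite odd_double.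
- by rewrite subn0 mul1r mul0r addr0.
- by rewrite mul0r mul0r addr0.
- by rewrite Hn1 mul0r add0r mul1r.
Qed.

End SD.

Section SE.
Local Open Scope ring_scope.


Definition gg n (a : nat) : rat :=
  let B := (TTn n (fun _ _ => 1%N))%:R in
  let Bo := (TTn n (fun u v => odd (u + v)%N))%:R in
  (Bo * (n%:R)^-1 + (B - Bo - a%:R) * (n%:R - 1)^-1) / (B - a%:R).

Lemma ar_eq n (w : 'I_n) : (1 < n)%N -> ar (path_rel n) w = gg n (minn w (n.-1 - w)).
Proof.
move=> Hn; rewrite /ar sum_rshare // card_Rvert /gg.
set a := minn w (n.-1 - w).
have Ha : TTn n (fun u v => u + v == w.*2)%N = a by rewrite K3 /a; have := ltn_ord w; lia.
have H1 : (TTn n (fun u v => w.*2 != u + v)%N + TTn n (fun u v => u + v == w.*2)%N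
           = TTn n (fun _ _ => 1))%N.
  rewrite TT_add; apply: TT_ext => u v; rewrite eq_sym; by case: (_ == _).
have H2 : (TTn n (fun u v => 1 - odd (u + v) - (u + v == w.*2))%N
           + TTn n (fun u v => odd (u + v)%N) + TTn n (fun u v => u + v == w.*2)%N
           = TTn n (fun _ _ => 1))%N.
  rewrite !TT_add; apply: TT_ext => u v; lia.
have E1 : (TTn n (fun u v => w.*2 != u + v)%N)%:R =
          (TTn n (fun _ _ => 1%N))%:R - a%:R :> rat by rewrite -H1 -Ha natrD addrK.
have E2 : (TTn n (fun u v => 1 - odd (u + v) - (u + v == w.*2))%N)%:R =
          (TTn n (fun _ _ => 1%N))%:R - (TTn n (fun u v => odd (u + v)%N))%:R - a%:R :> rat.
  by rewrite -H2 -Ha !natrD; ring.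
by rewrite E1 E2 mulrC.
Qed.

Lemma main_sum n : (1 < n)%N ->
  resolving_index (path_rel n) = \sum_(0 <= w < n) gg n (minn w (n.-1 - w)).
Proof.
move=> Hn; rewrite /resolving_index big_mkord; apply: eq_bigr => w _; exact: ar_eq.
Qed.

Lemma refl_even (F : nat -> rat) k :
  \sum_(0 <= w < k.*2) F (minn w ((k.*2).-1 - w)) = 2 * \sum_(0 <= i < k) F i.
Proof.
rewrite (@big_cat_nat _ _ _ k) /= ?leq_double ?leq_addr //; last by lia.
rewrite [X in X + _](_ : _ = \sum_(0 <= i < k) F i); last first.
  apply: eq_big_nat => i Hi; congr F; lia.
rewrite [in X in _ + X](_ : k = (0 + k)%N) // big_addn !add0n.
rewrite (_ : (k.*2 - k)%N = k); last lia.
rewrite [X in _ + X](big_nat_rev _ _ 0 k).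
rewrite [X in _ + X](_ : _ = \sum_(0 <= i < k) F i); last first.
  apply: eq_big_nat => i Hi; congr F; lia.
ring.
Qed.

Lemma refl_odd (F : nat -> rat) k :
  \sum_(0 <= w < (k.*2).+1) F (minn w ((k.*2.+1).-1 - w)) = 2 * \sum_(0 <= i < k) F i + F k.
Proof.
rewrite (@big_cat_nat _ _ _ k) /= ?leq_double ?leq_addr //; last by lia.
rewrite [X in X + _](_ : _ = \sum_(0 <= i < k) F i); last first.
  apply: eq_big_nat => i Hi; congr F; lia.
rewrite [X in _ + X]big_ltn; last by lia.
rewrite (_ : minn k (k.*2 - k) = k); last by lia.
rewrite [in X in _ + (_ + X)](_ : k.+1 = (0 + k.+1)%N) // big_addn ?add0n.
rewrite (_ : ((k.*2).+1 - k.+1)%N = k); last lia.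
rewrite [X in _ + (_ + X)](big_nat_rev _ _ 0 k).
rewrite [X in _ + (_ + X)](_ : _ = \sum_(0 <= i < k) F i); last first.
  apply: eq_big_nat => i Hi; congr F; lia.
ring.
Qed.

End SE.

Section SF.
Local Open Scope ring_scope.


Lemma HB n : (1 <= n)%N -> (TTn n (fun _ _ => 1%N))%:R = n%:R * (n%:R - 1) / 2 :> rat.
Proof.
move=> Hn; have := K1 n; move/(congr1 (fun m => m%:R : rat)).
rewrite -mul2n !natrM -subn1 natrB // => H.
by rewrite -H; field.
Qed.

Lemma even_pt n (hn : (3 <= n)%N) (k : nat) (En : n = k.*2) (i : nat) : (i < k)%N ->
  2 * gg n i = 
      ((2 * n%:R ^+ 2 - 3 * n%:R - 4 * (i.+1)%:R + 4) /
       (n%:R * (n%:R - 1) ^+ 2 - 2 * (n%:R - 1) * ((i.+1)%:R - 1)) : rat).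
Proof.
move=> Hi.
rewrite /gg HB; last lia.
rewrite K2 (_ : n./2 = k); last lia.
rewrite (_ : uphalf n = k); last lia.
rewrite En natrM -mul2n natrM mulrS.
have Hy : 0 <= i%:R :> rat by apply: ler0n.
have Hxy : i%:R + 1 <= k%:R :> rat.
  have : ((i + 1)%N%:R <= k%:R :> rat) by rewrite ler_nat addn1.
  by rewrite natrD.
have h1 : 0 < 2 * k%:R - 1 :> rat by lra.
have h2 : 0 < k%:R * (2 * k%:R - 1) - i%:R :> rat by nra.
have h3 := mulr_gt0 h1 h2.
field; apply/and4P; split; apply: lt0r_neq0; nra.
Qed.

Lemma odd_pt n (hn : (3 <= n)%N) (k : nat) (En : n = k.*2.+1) (i : nat) : (i < k)%N ->
  2 * gg n i =
      ((2 * n%:R ^+ 3 - 3 * n%:R ^+ 2 - 4 * n%:R * ((i.+1)%:R - 1) + 1) /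
       (n%:R ^+ 2 * (n%:R - 1) ^+ 2 - 2 * n%:R * (n%:R - 1) * ((i.+1)%:R - 1)) : rat).
Proof.
move=> Hi.
rewrite /gg HB; last lia.
rewrite K2 (_ : n./2 = k); last lia.
rewrite (_ : uphalf n = k.+1); last lia.
rewrite En (natrM _ k k.+1) !mulrS -mul2n natrM.
have Hy : 0 <= i%:R :> rat by apply: ler0n.
have Hxy : i%:R + 1 <= k%:R :> rat.
  have : ((i + 1)%N%:R <= k%:R :> rat) by rewrite ler_nat addn1.
  by rewrite natrD.
have h1 : 0 < 2 * k%:R :> rat by lra.
have h2 : 0 < (1 + 2 * k%:R) * k%:R - i%:R :> rat by nra.
have h3 := mulr_gt0 h1 h2.
have h4 : 0 < 1 + 2 * k%:R :> rat by lra.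
have h5 := mulr_gt0 h3 h4.
field; apply/and4P; split; apply: lt0r_neq0; nra.
Qed.

Lemma odd_mid n (hn : (3 <= n)%N) (k : nat) (En : n = k.*2.+1) :
  gg n k = (2 * n%:R ^+ 2 - 3 * n%:R - 1) / (2 * n%:R * (n%:R - 1) ^+ 2) :> rat.
Proof.
rewrite /gg HB; last lia.
rewrite K2 (_ : n./2 = k); last lia.
rewrite (_ : uphalf n = k.+1); last lia.
rewrite En (natrM _ k k.+1) !mulrS -mul2n natrM.
have Hk : 1 <= k%:R :> rat by rewrite ler1n; lia.
have h1 : 0 < 2 * k%:R :> rat by lra.
have h4 : 0 < 1 + 2 * k%:R :> rat by lra.
have h5 := mulr_gt0 h1 h4.
have h6 := mulr_gt0 h1 h1.
field; apply/and3P; split; apply: lt0r_neq0; nra.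
Qed.

Lemma refl_even' (F : nat -> rat) n k : n = k.*2 ->
  \sum_(0 <= w < n) F (minn w (n.-1 - w)) = 2 * \sum_(0 <= i < k) F i.
Proof. move=> ->; exact: refl_even. Qed.

Lemma refl_odd' (F : nat -> rat) n k : n = k.*2.+1 ->
  \sum_(0 <= w < n) F (minn w (n.-1 - w)) = 2 * \sum_(0 <= i < k) F i + F k.
Proof. move=> ->; exact: refl_odd. Qed.

Theorem theorem3p7 (n : nat) (hn : (3 <= n)%N) :
  resolving_index (path_rel n) =
  if ~~ odd n then
    \sum_(1 <= i < (n./2).+1)
      ((2 * n%:R ^+ 2 - 3 * n%:R - 4 * i%:R + 4) /
       (n%:R * (n%:R - 1) ^+ 2 - 2 * (n%:R - 1) * (i%:R - 1)) : rat)
  else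
    (2 * n%:R ^+ 2 - 3 * n%:R - 1) / (2 * n%:R * (n%:R - 1) ^+ 2)
    + \sum_(1 <= i < (n./2).+1)
      ((2 * n%:R ^+ 3 - 3 * n%:R ^+ 2 - 4 * n%:R * (i%:R - 1) + 1) /
       (n%:R ^+ 2 * (n%:R - 1) ^+ 2 - 2 * n%:R * (n%:R - 1) * (i%:R - 1)) : rat).
Proof.
rewrite main_sum; last lia.
have E := odd_double_half n.
case Ho: (odd n) => /=.
- have En : n = (n./2).*2.+1 by lia.
  rewrite (refl_odd' _ En) big_add1 /= mulr_sumr addrC (odd_mid hn En).
  congr (_ + _); apply: eq_big_nat => i Hi; apply: (odd_pt hn En); lia.
- have En : n = (n./2).*2 by lia.
  rewrite (refl_even' _ En) big_add1 /= mulr_sumr.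
  apply: eq_big_nat => i Hi; apply: (even_pt hn En); lia.
Qed.

End SF.
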